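(* Let $F(z)=\sum_{k=0}^\infty b_k z^k\in\mathcal{B}$ and $0\le r\le 1/\sqrt3$. Then \[ \sum_{k=2}^\infty k|b_k|^2r^{2k}\le \frac{27}{8}r^4. \]
   Context: $\mathbb{D}$ denotes the open unit disc. $\mathcal{B}$ is the class of functions $F$ analytic in $\mathbb{D}$ satisfying $|F'(z)|\le \frac{1}{1-|z|^2}$ for all $z\in\mathbb{D}$. For $F\in\mathcal{B}$ we write its Taylor expansion as $F(z)=\sum_{k=0}^\infty b_k z^k$. *)

(* Defs.v *)
From Stdlib Require Import Reals Lra Lia Arith.
Open Scope R_scope.

Definition Cplx : Type := (R * R)%type.
Definition Re (z : Cplx) : R := fst z.
Definition Im (z : Cplx) : R := snd z.
Definition C0 : Cplx := (0, 0).
Definition C1 : Cplx := (1, 0).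
Definition Cmul (z w : Cplx) : Cplx :=
  (Re z * Re w - Im z * Im w, Re z * Im w + Im z * Re w).
Definition Cscale (a : R) (z : Cplx) : Cplx := (a * Re z, a * Im z).
Fixpoint Cpow (z : Cplx) (n : nat) : Cplx :=
  match n with O => C1 | S m => Cmul z (Cpow z m) end.
Definition Cnorm (z : Cplx) : R := sqrt (Re z ^ 2 + Im z ^ 2).

Definition Cseries_cv (u : nat -> Cplx) (l : Cplx) : Prop :=
  Un_cv (fun N => sum_f_R0 (fun k => Re (u k)) N) (Re l) /\
  Un_cv (fun N => sum_f_R0 (fun k => Im (u k)) N) (Im l).

(* F(z) = sum b_k z^k is analytic in the unit disc (its Taylor series converges
   on D), and F'(z) = sum_{k>=0} (k+1) b_{k+1} z^k satisfies
   |F'(z)| <= 1/(1-|z|^2) for all |z| < 1. *)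
Definition in_B (b : nat -> Cplx) : Prop :=
  (forall z : Cplx, Cnorm z < 1 ->
     exists w : Cplx, Cseries_cv (fun k => Cmul (b k) (Cpow z k)) w) /\
  (forall z : Cplx, Cnorm z < 1 ->
     exists w : Cplx,
       Cseries_cv (fun k => Cscale (INR (S k)) (Cmul (b (S k)) (Cpow z k))) w /\
       Cnorm w <= 1 / (1 - Cnorm z ^ 2)).

(* Main.v *)
Require Import Defs.
From Stdlib Require Import Reals Lra Lia Arith.
Open Scope R_scope.

Fixpoint ps (f : nat -> R) (n : nat) : R :=
  match n with O => 0 | S m => ps f m + f m end.

Lemma ps_ext f g n : (forall k, (k < n)%nat -> f k = g k) -> ps f n = ps g n.
Proof. induction n; simpl; intros H; [reflexivity|].
  rewrite IHn by (intros; apply H; lia). rewrite H by lia. reflexivity. Qed.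

Lemma ps_plus f g n : ps (fun k => f k + g k) n = ps f n + ps g n.
Proof. induction n; simpl; [ring|]. rewrite IHn; ring. Qed.

Lemma ps_minus f g n : ps (fun k => f k - g k) n = ps f n - ps g n.
Proof. induction n; simpl; [ring|]. rewrite IHn; ring. Qed.

Lemma ps_scal c f n : ps (fun k => c * f k) n = c * ps f n.
Proof. induction n; simpl; [ring|]. rewrite IHn; ring. Qed.

Lemma ps_le f g n : (forall k, (k < n)%nat -> f k <= g k) -> ps f n <= ps g n.
Proof. induction n; simpl; intros H; [lra|].
  assert (ps f n <= ps g n) by (apply IHn; intros; apply H; lia).
  assert (f n <= g n) by (apply H; lia). lra. Qed.

Lemma ps_nonneg f n : (forall k, 0 <= f k) -> 0 <= ps f n.
Proof. intros H; induction n; simpl; [lra|]. specialize (H n). lra. Qed.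

Lemma ps_mono f n m : (forall k, 0 <= f k) -> (n <= m)%nat -> ps f n <= ps f m.
Proof. intros H Hnm. induction Hnm; [lra|]. simpl. specialize (H m). lra. Qed.

Lemma ps_swap (F : nat -> nat -> R) n m :
  ps (fun j => ps (fun k => F j k) n) m = ps (fun k => ps (fun j => F j k) m) n.
Proof. induction m; simpl.
  - induction n; simpl; [ring|]. rewrite <- IHn; ring.
  - rewrite IHm. rewrite <- ps_plus. reflexivity. Qed.

Lemma ps_delta (c : nat -> R) k n : (k < n)%nat ->
  ps (fun l => if Nat.eqb k l then c l else 0) n = c k.
Proof. induction n; intros H; [lia|]. simpl.
  destruct (Nat.eqb k n) eqn:E.
  - apply Nat.eqb_eq in E; subst n. rewrite (ps_ext _ (fun _ => 0)).
    + clear. assert (ps (fun _ => 0) k = 0) by (induction k; simpl; lra). lra.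
    + intros l Hl. destruct (Nat.eqb k l) eqn:E; [apply Nat.eqb_eq in E; lia|auto].
  - apply Nat.eqb_neq in E. rewrite IHn by lia. ring. Qed.

Lemma ps_sq f n : ps f n * ps f n = ps (fun k => ps (fun l => f k * f l) n) n.
Proof. rewrite <- (ps_scal (ps f n) f n).
  apply ps_ext. intros k _. rewrite Rmult_comm, <- (ps_scal (f k) f n). reflexivity. Qed.

Lemma sum_f_ps f n : sum_f_R0 f n = ps f (S n).
Proof. induction n; simpl; [ring|]. simpl in IHn. rewrite IHn. reflexivity. Qed.

Lemma tel_cos a M : 2 * sin (a/2) * ps (fun j => cos (INR j * a)) M
   = sin ((INR M - /2) * a) + sin (a/2).
Proof. induction M; simpl ps.
  - simpl INR. replace ((0 - /2) * a) with (- (a/2)) by field. rewrite sin_neg. ring.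
  - rewrite Rmult_plus_distr_l, IHM, S_INR.
    replace ((INR M + 1 - /2) * a) with (INR M * a + a/2) by field.
    replace ((INR M - /2) * a) with (INR M * a - a/2) by field.
    rewrite sin_plus, sin_minus. ring. Qed.

Lemma tel_sin a M : 2 * sin (a/2) * ps (fun j => sin (INR j * a)) M
   = cos (a/2) - cos ((INR M - /2) * a).
Proof. induction M; simpl ps.
  - simpl INR. replace ((0 - /2) * a) with (- (a/2)) by field. rewrite cos_neg. ring.
  - rewrite Rmult_plus_distr_l, IHM, S_INR.
    replace ((INR M + 1 - /2) * a) with (INR M * a + a/2) by field.
    replace ((INR M - /2) * a) with (INR M * a - a/2) by field.
    rewrite cos_plus, cos_minus. ring. Qed.

Lemma trig_sums a M : sin (a/2) <> 0 -> sin (INR M * a / 2) = 0 ->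
  ps (fun j => cos (INR j * a)) M = 0 /\ ps (fun j => sin (INR j * a)) M = 0.
Proof. intros H1 H2.
  assert (HS : sin (INR M * a) = 0).
  { replace (INR M * a) with (2 * (INR M * a / 2)) by field. rewrite sin_2a, H2. ring. }
  assert (HC : cos (INR M * a) = 1).
  { replace (INR M * a) with (2 * (INR M * a / 2)) by field. rewrite cos_2a_sin, H2. ring. }
  replace ((INR M - /2) * a) with (INR M * a - a/2) by field.
  pose proof (tel_cos a M) as E1. pose proof (tel_sin a M) as E2.
  replace ((INR M - /2) * a) with (INR M * a - a/2) in E1, E2 by field.
  rewrite sin_minus, HS, HC in E1. rewrite cos_minus, HS, HC in E2.
  split.
  - apply (Rmult_eq_reg_l (2 * sin (a/2))); [|intro; apply H1; lra]. rewrite E1. ring.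
  - apply (Rmult_eq_reg_l (2 * sin (a/2))); [|intro; apply H1; lra]. rewrite E2. ring.
Qed.

Lemma ps_const c n : ps (fun _ => c) n = INR n * c.
Proof. induction n; simpl ps; [simpl; ring|]. rewrite IHn, S_INR; ring. Qed.

Lemma orth M k l : (k < M)%nat -> (l < M)%nat -> k <> l ->
  let a := (INR k - INR l) * (2 * PI / INR M) in
  ps (fun j => cos (INR j * a)) M = 0 /\ ps (fun j => sin (INR j * a)) M = 0.
Proof. intros Hk Hl Hkl a. apply trig_sums.
  - assert (HM : 0 < INR M) by (apply lt_0_INR; lia).
    assert (E : a / 2 = (INR k - INR l) / INR M * PI) by (unfold a; field; lra).
    rewrite E. pose proof PI_RGT_0.
    assert (Hk' : INR k < INR M) by (apply lt_INR; auto).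
    assert (Hl' : INR l < INR M) by (apply lt_INR; auto).
    pose proof (pos_INR k). pose proof (pos_INR l).
    destruct (Nat.lt_total k l) as [Hc|[Hc|Hc]].
    + apply lt_INR in Hc.
      assert (0 < (INR l - INR k) / INR M < 1).
      { split; [apply Rdiv_lt_0_compat; lra|]. apply Rmult_lt_reg_r with (INR M); auto.
        field_simplify; lra. }
      intro Hs. assert (0 < sin ((INR l - INR k) / INR M * PI)) by (apply sin_gt_0; nra).
      replace ((INR k - INR l) / INR M * PI) with (- ((INR l - INR k) / INR M * PI)) in Hs
        by (field; lra). rewrite sin_neg in Hs. lra.
    + lia.
    + apply lt_INR in Hc.
      assert (0 < (INR k - INR l) / INR M < 1).
      { split; [apply Rdiv_lt_0_compat; lra|]. apply Rmult_lt_reg_r with (INR M); auto.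
        field_simplify; lra. }
      assert (0 < sin ((INR k - INR l) / INR M * PI)) by (apply sin_gt_0; nra). lra.
  - assert (HM : 0 < INR M) by (apply lt_0_INR; lia).
    apply sin_eq_0_1. exists (Z.of_nat k - Z.of_nat l)%Z.
    rewrite minus_IZR, <- !INR_IZR_INZ. unfold a. field. lra.
Qed.

Lemma parseval M (u v : nat -> R) : (0 < M)%nat ->
  ps (fun j => (ps (fun k => u k * cos (INR k * (INR j * (2 * PI / INR M))) - v k * sin (INR k * (INR j * (2 * PI / INR M)))) M)^2
             + (ps (fun k => u k * sin (INR k * (INR j * (2 * PI / INR M))) + v k * cos (INR k * (INR j * (2 * PI / INR M)))) M)^2) M
  = INR M * ps (fun k => u k ^2 + v k ^2) M.
Proof. intros HM. set (th := 2 * PI / INR M).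
  rewrite (ps_ext _ (fun j => ps (fun k => ps (fun l =>
      (u k * u l + v k * v l) * cos (INR j * ((INR k - INR l) * th))
    + (u k * v l - v k * u l) * sin (INR j * ((INR k - INR l) * th))) M) M)).
  2:{ intros j _. rewrite <- !Rsqr_pow2; unfold Rsqr. rewrite !ps_sq, <- ps_plus.
       apply ps_ext; intros k _. rewrite <- ps_plus. apply ps_ext; intros l _.
       replace (INR j * ((INR k - INR l) * th)) with (INR k * (INR j * th) - INR l * (INR j * th)) by ring.
       rewrite cos_minus, sin_minus. ring. }
  rewrite ps_swap.
  rewrite (ps_ext _ (fun k => ps (fun l => if Nat.eqb k l then INR M * (u l ^2 + v l ^ 2) else 0) M)).
  2:{ intros k Hk. rewrite ps_swap. apply ps_ext. intros l Hl.
      rewrite ps_plus, !ps_scal. destruct (Nat.eqb k l) eqn:E.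
      - apply Nat.eqb_eq in E. subst l. rewrite Rminus_diag, Rmult_0_l.
        rewrite (ps_ext _ (fun _ => 1)) by (intros; rewrite Rmult_0_r; apply cos_0).
        rewrite (ps_ext (fun j => sin _) (fun _ => 0)) by (intros; rewrite Rmult_0_r; apply sin_0).
        rewrite !ps_const. ring.
      - apply Nat.eqb_neq in E. destruct (orth M k l Hk Hl E) as [H1 H2].
        unfold th. rewrite H1, H2. ring. }
  rewrite <- ps_scal. apply ps_ext. intros k Hk. apply ps_delta. auto.
Qed.

Lemma cpow_polar rho t k : Cpow (rho * cos t, rho * sin t) k
  = (rho ^ k * cos (INR k * t), rho ^ k * sin (INR k * t)).
Proof. induction k; simpl Cpow.
  - simpl INR. rewrite Rmult_0_l, cos_0, sin_0. unfold Defs.C1. f_equal; ring.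
  - rewrite IHk. unfold Cmul, Re, Im; simpl fst; simpl snd. rewrite S_INR.
    replace ((INR k + 1) * t) with (INR k * t + t) by ring. rewrite cos_plus, sin_plus.
    f_equal; simpl; ring. Qed.

Lemma term_zero f l : Un_cv (fun N => sum_f_R0 f N) l ->
  forall eps, 0 < eps -> exists K, forall k, (k >= K)%nat -> Rabs (f k) < eps.
Proof. intros H eps He. destruct (H (eps/2)) as [N HN]; [lra|].
  exists (S N). intros k Hk. destruct k as [|n]; [lia|].
  assert (A := HN (S n) ltac:(lia)). assert (B := HN n ltac:(lia)).
  unfold Rdist in A, B. simpl in A.
  replace (f (S n)) with ((sum_f_R0 f n + f (S n) - l) - (sum_f_R0 f n - l)) by ring.
  eapply Rle_lt_trans; [apply Rabs_triang|]. rewrite Rabs_Ropp. lra. Qed.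

Lemma limit_le s l c T N0 : Un_cv s l -> (forall n, (n >= N0)%nat -> Rabs (s n - c) <= T) ->
  Rabs (l - c) <= T.
Proof. intros H HB. destruct (Rle_or_lt (Rabs (l - c)) T) as [|Hlt]; [auto|].
  exfalso. destruct (H (Rabs (l - c) - T)) as [N HN]; [lra|].
  assert (A := HN (max N N0) ltac:(lia)). assert (B := HB (max N N0) ltac:(lia)).
  unfold Rdist in A.
  assert (Rabs (l - c) <= Rabs (s (max N N0) - l) + Rabs (s (max N N0) - c)).
  { replace (l - c) with (-(s (max N N0) - l) + (s (max N N0) - c)) by ring.
    eapply Rle_trans; [apply Rabs_triang|]. rewrite Rabs_Ropp. lra. }
  lra. Qed.

Lemma geom_ps q N : ps (fun k => q ^ k) N * (1 - q) = 1 - q ^ N.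
Proof. induction N; simpl ps; simpl pow; [ring|]. rewrite Rmult_plus_distr_r, IHN. ring. Qed.

Lemma geom_tail q M N : 0 <= q < 1 -> (M <= N)%nat ->
  ps (fun k => 2 * q ^ k) N - ps (fun k => 2 * q ^ k) M <= 2 * q ^ M / (1 - q).
Proof. intros Hq HMN. rewrite !(ps_scal 2 (fun k => q ^ k)).
  assert (E1 := geom_ps q N). assert (E2 := geom_ps q M).
  assert (ps (fun k => q ^ k) N = (1 - q ^ N) / (1 - q)) as ->. { rewrite <- E1. field. lra. }
  assert (ps (fun k => q ^ k) M = (1 - q ^ M) / (1 - q)) as ->. { rewrite <- E2. field. lra. }
  assert (0 <= q ^ N) by (apply pow_le; lra).
  unfold Rdiv. assert (0 < / (1 - q)) by (apply Rinv_0_lt_compat; lra).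
  assert (2 * ((1 - q ^ N) * / (1 - q)) - 2 * ((1 - q ^ M) * / (1 - q)) =
     2 * q ^ M * / (1 - q) - 2 * q ^ N * / (1 - q)) as -> by ring.
  assert (0 <= 2 * q ^ N * / (1 - q)) by (apply Rmult_le_pos; lra). lra. Qed.

Lemma tail_diff f g M N : (M <= N)%nat -> (forall k, (k >= M)%nat -> Rabs (f k) <= g k) ->
  Rabs (ps f N - ps f M) <= ps g N - ps g M.
Proof. intros HMN H. induction HMN.
  - rewrite !Rminus_diag, Rabs_R0. lra.
  - simpl ps. replace (ps f m + f m - ps f M) with ((ps f m - ps f M) + f m) by ring.
    eapply Rle_trans; [apply Rabs_triang|]. assert (Rabs (f m) <= g m) by (apply H; lia). lra. Qed.

Lemma sq_bound a b c d S T : 0 <= S -> 0 <= T -> a^2 + b^2 <= S^2 -> Rabs c <= T -> Rabs d <= T ->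
  (a + c)^2 + (b + d)^2 <= (S + 2 * T)^2.
Proof. intros HS HT H Hc Hd.
  assert (Rabs a + Rabs b <= 2 * S).
  { assert ((Rabs a + Rabs b)^2 <= (2*S)^2).
    { assert (Rabs a ^2 = a^2) by (rewrite <- Rsqr_pow2, <- Rsqr_abs, Rsqr_pow2; auto).
      assert (Rabs b ^2 = b^2) by (rewrite <- Rsqr_pow2, <- Rsqr_abs, Rsqr_pow2; auto).
      nra. }
    pose proof (Rabs_pos a); pose proof (Rabs_pos b). nra. }
  assert (a * c <= Rabs a * T).
  { eapply Rle_trans; [apply RRle_abs|]. rewrite Rabs_mult. apply Rmult_le_compat_l; auto. apply Rabs_pos. }
  assert (b * d <= Rabs b * T).
  { eapply Rle_trans; [apply RRle_abs|]. rewrite Rabs_mult. apply Rmult_le_compat_l; auto. apply Rabs_pos. }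
  assert (c^2 <= T^2). { rewrite <- Rsqr_pow2, Rsqr_abs, Rsqr_pow2. pose proof (Rabs_pos c). nra. }
  assert (d^2 <= T^2). { rewrite <- Rsqr_pow2, Rsqr_abs, Rsqr_pow2. pose proof (Rabs_pos d). nra. }
  nra. Qed.

Lemma term_re b z k : Re (Cscale (INR (S k)) (Cmul (b (S k)) (Cpow z k))) =
  INR (S k) * (Re (b (S k)) * Re (Cpow z k) - Im (b (S k)) * Im (Cpow z k)).
Proof. reflexivity. Qed.
Lemma term_im b z k : Im (Cscale (INR (S k)) (Cmul (b (S k)) (Cpow z k))) =
  INR (S k) * (Re (b (S k)) * Im (Cpow z k) + Im (b (S k)) * Re (Cpow z k)).
Proof. reflexivity. Qed.

Lemma coeff_bound b : in_B b -> exists K, forall k, (k >= K)%nat ->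
  Rabs (INR (S k) * fst (b (S k)) * (4/5)^k) < 1 /\ Rabs (INR (S k) * snd (b (S k)) * (4/5)^k) < 1.
Proof. intros [_ H2].
  destruct (H2 ((4/5) * cos 0, (4/5) * sin 0)) as [w [[Hre Him] _]].
  { unfold Cnorm, Re, Im; simpl fst; simpl snd. rewrite cos_0, sin_0.
    replace ((4/5*1)^2 + (4/5*0)^2) with ((4/5)^2) by ring. rewrite sqrt_pow2; lra. }
  destruct (term_zero _ _ Hre 1 ltac:(lra)) as [K1 HK1].
  destruct (term_zero _ _ Him 1 ltac:(lra)) as [K2 HK2].
  exists (max K1 K2). intros k Hk. specialize (HK1 k ltac:(lia)). specialize (HK2 k ltac:(lia)).
  rewrite term_re, cpow_polar in HK1. rewrite term_im, cpow_polar in HK2.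
  unfold Re, Im in *. simpl fst in *; simpl snd in *.
  rewrite Rmult_0_r, cos_0, sin_0 in HK1, HK2.
  split.
  - replace (INR (S k) * fst (b (S k)) * (4 / 5) ^ k) with
      (INR (S k) * (fst (b (S k)) * ((4 / 5) ^ k * 1) - snd (b (S k)) * ((4 / 5) ^ k * 0))) by ring. auto.
  - replace (INR (S k) * snd (b (S k)) * (4 / 5) ^ k) with
      (INR (S k) * (fst (b (S k)) * ((4 / 5) ^ k * 0) + snd (b (S k)) * ((4 / 5) ^ k * 1))) by ring. auto.
Qed.

Lemma comp_tail f l M K q : 0 <= q < 1 -> (K <= M)%nat ->
  Un_cv (fun N => sum_f_R0 f N) l -> (forall k, (k >= K)%nat -> Rabs (f k) <= 2 * q ^ k) ->
  Rabs (l - ps f M) <= 2 * q ^ M / (1 - q).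
Proof. intros Hq HKM Hcv Hb. apply (limit_le _ _ _ _ M Hcv). intros n Hn.
  rewrite sum_f_ps. eapply Rle_trans.
  - apply (tail_diff f (fun k => 2 * q ^ k)); [lia|]. intros k Hk; apply Hb; lia.
  - apply geom_tail; auto. Qed.

Lemma trig_abs1 u v c s : -1 <= c <= 1 -> -1 <= s <= 1 -> Rabs (u * c - v * s) <= Rabs u + Rabs v.
Proof. intros Hc Hs. unfold Rminus. eapply Rle_trans; [apply Rabs_triang|].
  rewrite Rabs_Ropp, !Rabs_mult.
  assert (Rabs c <= 1) by (apply Rabs_le; lra). assert (Rabs s <= 1) by (apply Rabs_le; lra).
  pose proof (Rabs_pos u); pose proof (Rabs_pos v); pose proof (Rabs_pos c); pose proof (Rabs_pos s). nra. Qed.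

Lemma trig_abs2 u v c s : -1 <= c <= 1 -> -1 <= s <= 1 -> Rabs (u * s + v * c) <= Rabs u + Rabs v.
Proof. intros Hc Hs. eapply Rle_trans; [apply Rabs_triang|].
  rewrite !Rabs_mult.
  assert (Rabs c <= 1) by (apply Rabs_le; lra). assert (Rabs s <= 1) by (apply Rabs_le; lra).
  pose proof (Rabs_pos u); pose proof (Rabs_pos v); pose proof (Rabs_pos c); pose proof (Rabs_pos s). nra. Qed.

Definition rho := sqrt (/3).
Definition qq := rho * (5/4).

Lemma rho_pos : 0 < rho.
Proof. unfold rho. apply sqrt_lt_R0. lra. Qed.
Lemma rho2 : rho ^ 2 = /3.
Proof. unfold rho. apply pow2_sqrt. lra. Qed.
Lemma qq_bounds : 0 <= qq < 1.
Proof. pose proof rho_pos. pose proof rho2. unfold qq. split; [lra|]. nra. Qed.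

Lemma key_M b K : in_B b -> (forall k, (k >= K)%nat ->
  Rabs (INR (S k) * Re (b (S k)) * (4/5)^k) < 1 /\ Rabs (INR (S k) * Im (b (S k)) * (4/5)^k) < 1) ->
  forall M, (K <= M)%nat -> (0 < M)%nat ->
  ps (fun k => INR (S k) ^ 2 * (/3) ^ k * Cnorm (b (S k)) ^ 2) M
   <= (3/2 + 2 * (2 * qq ^ M / (1 - qq))) ^ 2.
Proof. intros HB HK M HKM HM.
  pose proof rho_pos as Hr. pose proof rho2 as Hr2. pose proof qq_bounds as Hq.
  set (T := 2 * qq ^ M / (1 - qq)).
  assert (HT : 0 <= T). { unfold T. apply Rmult_le_pos; [apply Rmult_le_pos; [lra|apply pow_le; lra]|].
    apply Rlt_le, Rinv_0_lt_compat; lra. }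
  set (u := fun k => INR (S k) * rho ^ k * Re (b (S k))).
  set (v := fun k => INR (S k) * rho ^ k * Im (b (S k))).
  assert (Huv : forall k, (k >= K)%nat -> Rabs (u k) + Rabs (v k) <= 2 * qq ^ k).
  { intros k Hk. destruct (HK k Hk) as [H1 H2].
    assert (E : rho ^ k = qq ^ k * (4/5) ^ k) by (rewrite <- Rpow_mult_distr; unfold qq; f_equal; field).
    assert (0 <= qq ^ k) by (apply pow_le; lra).
    unfold u, v. rewrite E.
    replace (INR (S k) * (qq ^ k * (4 / 5) ^ k) * Re (b (S k))) with
      ((INR (S k) * Re (b (S k)) * (4/5)^k) * qq ^ k) by ring.
    replace (INR (S k) * (qq ^ k * (4 / 5) ^ k) * Im (b (S k))) with
      ((INR (S k) * Im (b (S k)) * (4/5)^k) * qq ^ k) by ring.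
    rewrite !(Rabs_mult (_ * _ * _) (qq ^ k)), (Rabs_right (qq ^ k)) by lra. nra. }
  set (th := 2 * PI / INR M).
  assert (Hj : forall j,
    (ps (fun k => u k * cos (INR k * (INR j * th)) - v k * sin (INR k * (INR j * th))) M)^2
  + (ps (fun k => u k * sin (INR k * (INR j * th)) + v k * cos (INR k * (INR j * th))) M)^2
    <= (3/2 + 2 * T) ^ 2).
  { intros j. set (t := INR j * th). destruct HB as [_ H2].
    assert (Hz : Cnorm (rho * cos t, rho * sin t) = rho).
    { unfold Cnorm, Re, Im; simpl fst; simpl snd.
      assert (sin t ^ 2 + cos t ^ 2 = 1) by (rewrite <- !Rsqr_pow2; apply sin2_cos2).
      replace ((rho * cos t) ^ 2 + (rho * sin t) ^ 2) with (rho ^ 2 * (sin t ^ 2 + cos t ^ 2)) by ring.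
      rewrite H, Rmult_1_r. apply sqrt_pow2. lra. }
    destruct (H2 (rho * cos t, rho * sin t)) as [w [[Hre Him] Hw]]; [rewrite Hz; nra|].
    rewrite Hz, Hr2 in Hw. replace (1 / (1 - /3)) with (3/2) in Hw by field.
    assert (Hw2 : Re w ^ 2 + Im w ^ 2 <= (3/2)^2).
    { unfold Cnorm in Hw. rewrite <- (pow2_sqrt (Re w ^ 2 + Im w ^ 2)) by nra.
      apply pow_incr. split; [apply sqrt_pos|auto]. }
    assert (Ere : forall k, Re (Cscale (INR (S k)) (Cmul (b (S k)) (Cpow (rho * cos t, rho * sin t) k)))
       = u k * cos (INR k * t) - v k * sin (INR k * t)).
    { intros k. rewrite term_re, cpow_polar. unfold u, v. simpl. ring. }
    assert (Eim : forall k, Im (Cscale (INR (S k)) (Cmul (b (S k)) (Cpow (rho * cos t, rho * sin t) k)))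
       = u k * sin (INR k * t) + v k * cos (INR k * t)).
    { intros k. rewrite term_im, cpow_polar. unfold u, v. simpl. ring. }
    assert (A1 := comp_tail _ _ M K qq Hq HKM Hre).
    assert (A2 := comp_tail _ _ M K qq Hq HKM Him).
    rewrite (ps_ext _ (fun k => u k * cos (INR k * t) - v k * sin (INR k * t))) in A1 by (intros; apply Ere).
    rewrite (ps_ext _ (fun k => u k * sin (INR k * t) + v k * cos (INR k * t))) in A2 by (intros; apply Eim).
    fold T in A1, A2.
    assert (B1 : Rabs (Re w - ps (fun k => u k * cos (INR k * t) - v k * sin (INR k * t)) M) <= T).
    { apply A1. intros k Hk. rewrite Ere. eapply Rle_trans; [apply trig_abs1; [apply COS_bound|apply SIN_bound]|].
      apply Huv; auto. }
    assert (B2 : Rabs (Im w - ps (fun k => u k * sin (INR k * t) + v k * cos (INR k * t)) M) <= T).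
    { apply A2. intros k Hk. rewrite Eim. eapply Rle_trans; [apply trig_abs2; [apply COS_bound|apply SIN_bound]|].
      apply Huv; auto. }
    rewrite Rabs_minus_sym in B1, B2.
    set (X := ps (fun k => u k * cos (INR k * t) - v k * sin (INR k * t)) M) in *.
    set (Y := ps (fun k => u k * sin (INR k * t) + v k * cos (INR k * t)) M) in *.
    replace X with (Re w + (X - Re w)) by ring. replace Y with (Im w + (Y - Im w)) by ring.
    apply sq_bound; auto; lra. }
  assert (HMp : 0 < INR M) by (apply lt_0_INR; lia).
  assert (P := parseval M u v HM). fold th in P.
  assert (Hsum : INR M * ps (fun k => u k ^ 2 + v k ^ 2) M <= INR M * (3/2 + 2 * T) ^ 2).
  { rewrite <- P, <- ps_const. apply ps_le. intros j _. apply Hj. }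
  apply Rmult_le_reg_l in Hsum; auto.
  eapply Rle_trans; [|exact Hsum]. right. apply ps_ext. intros k _.
  unfold u, v, Cnorm. rewrite pow2_sqrt by nra.
  assert ((rho ^ k) ^ 2 = (/3) ^ k) by (rewrite <- pow_mult, Nat.mul_comm, pow_mult, Hr2; reflexivity).
  rewrite <- H. ring.
Qed.

Definition hh b k := INR (S k) ^ 2 * (/3) ^ k * Cnorm (b (S k)) ^ 2.

Lemma hh_nonneg b k : 0 <= hh b k.
Proof. unfold hh. apply Rmult_le_pos; [apply Rmult_le_pos|].
  - apply pow2_ge_0. - apply pow_le; lra. - apply pow2_ge_0. Qed.

Lemma key b : in_B b -> forall N, ps (hh b) N <= 9/4.
Proof. intros HB N. destruct (coeff_bound b HB) as [K HK].
  pose proof qq_bounds as Hq.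
  destruct (Rle_or_lt (ps (hh b) N) (9/4)) as [|Hs]; [auto|exfalso].
  set (s := ps (hh b) N) in *.
  set (d := (s - 9/4) / (5 + s)).
  assert (Hd : 0 < d /\ d <= 1 /\ 4 * d < s - 9/4).
  { unfold d. split; [apply Rdiv_lt_0_compat; lra|]. split.
    - apply Rmult_le_reg_r with (5 + s); [lra|]. field_simplify; lra.
    - apply Rmult_lt_reg_r with (5 + s); [lra|]. field_simplify; nra. }
  destruct (pow_lt_1_zero qq ltac:(rewrite Rabs_right; lra) (d * (1 - qq) / 4)) as [N1 HN1].
  { apply Rmult_lt_0_compat; [|lra]. apply Rmult_lt_0_compat; lra. }
  set (M := (N + K + N1 + 1)%nat).
  assert (A := key_M b K HB HK M ltac:(unfold M; lia) ltac:(unfold M; lia)).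
  assert (B := HN1 M ltac:(unfold M; lia)).
  assert (0 <= qq ^ M) by (apply pow_le; lra).
  rewrite Rabs_right in B by lra.
  assert (C : 2 * (2 * qq ^ M / (1 - qq)) < d).
  { apply Rmult_lt_reg_r with (1 - qq); [lra|]. field_simplify; [|lra].
    apply Rmult_lt_compat_r with (r := 4) in B; [|lra]. field_simplify in B. lra. }
  assert (D : ps (hh b) N <= ps (hh b) M) by (apply ps_mono; [apply hh_nonneg|unfold M; lia]).
  fold s in D. unfold hh in D.
  assert (0 <= 2 * (2 * qq ^ M / (1 - qq))).
  { apply Rmult_le_pos; [lra|]. apply Rmult_le_pos; [lra|]. apply Rlt_le, Rinv_0_lt_compat; lra. }
  nra.
Qed.

Lemma ps_shift f n : ps f (S n) = f O + ps (fun k => f (S k)) n.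
Proof. induction n; simpl ps; [ring|]. simpl ps in IHn. rewrite IHn. ring. Qed.

Lemma pow_bound x m : 0 <= x <= /3 ->
  x ^ (S (S m)) <= 3/2 * x ^ 2 * INR (S (S m)) * (/3) ^ (S m).
Proof. intros Hx. assert (H1 : x ^ m <= (/3) ^ m) by (apply pow_incr; lra).
  assert (0 <= x ^ m) by (apply pow_le; lra).
  assert (0 <= INR m) by apply pos_INR.
  assert (0 <= (/3) ^ m) by (apply pow_le; lra).
  assert (H4 : x ^ m <= (INR m + 2) / 2 * (/3) ^ m) by nra.
  assert (H3 : x * x * x ^ m <= x * x * ((INR m + 2) / 2 * (/3) ^ m)) by (apply Rmult_le_compat_l; nra).
  rewrite !S_INR. simpl pow. lra. Qed.

Theorem corollary2 (b : nat -> Cplx) (r : R) :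
  in_B b -> 0 <= r <= 1 / sqrt 3 ->
  exists l : R,
    infinite_sum
      (fun k => if (k <? 2)%nat then 0 else INR k * Cnorm (b k) ^ 2 * r ^ (2 * k)) l /\
    l <= 27 / 8 * r ^ 4.
Proof. intros HB Hr.
  set (g := fun k => if (k <? 2)%nat then 0 else INR k * Cnorm (b k) ^ 2 * r ^ (2 * k)).
  set (x := r ^ 2).
  assert (Hx : 0 <= x <= /3).
  { unfold x. split; [apply pow2_ge_0|].
    assert (r ^ 2 <= (1 / sqrt 3) ^ 2) by (apply pow_incr; lra).
    assert ((1 / sqrt 3) ^ 2 = /3).
    { unfold Rdiv. rewrite Rmult_1_l, pow_inv, pow2_sqrt by lra. reflexivity. }
    lra. }
  assert (Hg0 : forall k, 0 <= g k).
  { intros k. unfold g. destruct (k <? 2)%nat; [lra|].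
    apply Rmult_le_pos; [apply Rmult_le_pos; [apply pos_INR|apply pow2_ge_0]|].
    rewrite pow_mult. apply pow_le, pow2_ge_0. }
  assert (Hgb : forall k, g (S k) <= 3/2 * x ^ 2 * hh b k).
  { intros k. pose proof (hh_nonneg b k). destruct k as [|m].
    - unfold g. simpl. nra.
    - unfold g. replace ((S (S m) <? 2)%nat) with false by reflexivity.
      rewrite pow_mult. fold x. unfold hh.
      pose proof (pow_bound x m Hx).
      assert (0 <= INR (S (S m)) * Cnorm (b (S (S m))) ^ 2)
        by (apply Rmult_le_pos; [apply pos_INR|apply pow2_ge_0]).
      replace (3 / 2 * x ^ 2 * (INR (S (S m)) ^ 2 * (/ 3) ^ S m * Cnorm (b (S (S m))) ^ 2))
        with ((INR (S (S m)) * Cnorm (b (S (S m))) ^ 2) * (3/2 * x ^ 2 * INR (S (S m)) * (/3) ^ (S m)))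
        by ring.
      rewrite (Rmult_comm (INR (S (S m)) * Cnorm (b (S (S m))) ^ 2) (x ^ S (S m))).
      nra. }
  assert (Hbound : forall n, sum_f_R0 g n <= 27/8 * r ^ 4).
  { intros n. rewrite sum_f_ps, ps_shift.
    assert (g O = 0) as -> by (unfold g; reflexivity).
    assert (ps (fun k => g (S k)) n <= 3/2 * x^2 * ps (hh b) n).
    { rewrite <- ps_scal. apply ps_le. intros; apply Hgb. }
    assert (ps (hh b) n <= 9/4) by (apply key; auto).
    assert (0 <= x ^ 2) by apply pow2_ge_0.
    replace (r ^ 4) with (x ^ 2) by (unfold x; ring). nra. }
  destruct (growing_cv (fun n => sum_f_R0 g n)) as [l Hl].
  - intros n. simpl. specialize (Hg0 (S n)). lra.
  - exists (27/8 * r ^ 4). intros y [i ->]. apply Hbound.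
  - exists l. split.
    + exact Hl.
    + destruct (Rle_or_lt l (27/8 * r^4)) as [|Hlt]; [auto|exfalso].
      destruct (Hl (l - 27/8 * r^4)) as [N HN]; [lra|].
      specialize (HN N (le_n N)). specialize (Hbound N). unfold Rdist in HN.
      apply Rabs_def2 in HN. lra.
Qed.
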